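(* Let $m\ge1$ and $\beta\in\mathbb R$. For $0\le s\le m$ set $\varepsilon_j=-1$ for $1\le j\le s$ and $\varepsilon_j=+1$ for $s<j\le m$, and $$F_s(m)=\frac{2^{m^2-m}}{\pi^m\,s!\,(m-s)!}\int_{[0,\pi/2]^m}dp_1\cdots dp_m\prod_{1\le k<j\le m}\sin^2(\varepsilon_jp_j-\varepsilon_kp_k).$$ Then $$\sum_{s=0}^m e^{s\beta}F_s(m)=\det_m T(\beta),\qquad T_{kn}(\beta)=\delta_{kn}\frac{e^\beta+1}{2}+(1-\delta_{kn})(1-e^\beta)\frac{1-(-1)^{n-k}}{2i\pi(n-k)},\quad 1\le k,n\le m.$$
   Context: This is the homogeneous free-fermion ($\zeta=\pi/2$) case of the generating function $\mathcal Q_m(\beta)=\langle\psi_g|\exp(\beta\sum_{j=1}^m\frac12(1-\sigma^z_j))|\psi_g\rangle$ of the XX chain; the claim is the stated integral/determinant identity. *)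

(* Defs.v *)
From Stdlib Require Import Reals.
From Coquelicot Require Import Coquelicot.
From mathcomp Require Import all_boot all_order all_algebra.
From mathcomp Require Import Rstruct complex.
Set Implicit Arguments. Unset Strict Implicit. Unset Printing Implicit Defensive.
Import Order.TTheory GRing.Theory Num.Theory.

(* Iterated integral over the cube [0,pi/2]^m of f : (nat -> R) -> R,
   variables p_1..p_m are stored at indices 0..m-1.  *)
Fixpoint iint_cube (m : nat) (f : (nat -> R) -> R) : R :=
  match m with
  | O => f (fun _ => 0%R)
  | S m' => RInt (fun x => iint_cube m'
               (fun p => f (fun j => if Nat.eqb j m' then x else p j)))
             0%R (PI / 2)%R
  end.

(* epsilon_j (0-based index j, i.e. paper index j+1): -1 for j+1 <= s, +1 otherwise *)
Definition eps (s j : nat) : R := if (j < s)%N then (-1)%R else 1%R.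

Local Open Scope ring_scope.
Local Open Scope complex_scope.

Definition integrand (m s : nat) (p : nat -> R) : R :=
  \prod_(j < m) \prod_(k < j) (sin (eps s j * p j - eps s k * p k)) ^+ 2.

Definition F (s m : nat) : R :=
  (2 ^+ (m * m - m))%R / (PI ^+ m * (s`!)%:R * ((m - s)`!)%:R)
  * iint_cube m (integrand m s).

(* the matrix T(beta), 0-based indices k n (paper indices k+1, n+1) *)
Definition Tmat (m : nat) (beta : R) : 'M[R[i]]_m :=
  \matrix_(k < m, n < m)
    if k == n then ((exp beta + 1) / 2)%:C
    else ((1 - exp beta)%:C * (1 - (-1) ^ (n%:Z - k%:Z))
          / (2 * 'i * (PI%:C) * ((n%:Z - k%:Z)%:~R))).

(* Main.v *)
Require Import Defs.
From Stdlib Require Import Reals FunctionalExtensionality.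
From Coquelicot Require Import Coquelicot.
From mathcomp Require Import all_boot all_order all_algebra all_fingroup.
From mathcomp Require Import Rstruct complex.
Import Order.TTheory GRing.Theory Num.Theory.
Local Open Scope ring_scope.
Local Open Scope complex_scope.
Notation cRe := (@complex.Re _).
Notation cIm := (@complex.Im _).

Lemma is_RInt_sumseq (I : eqType) (r : seq I) (F : I -> R -> R) (v : I -> R) a b :
  (forall t, is_RInt (F t) a b (v t)) ->
  is_RInt (fun x => \sum_(t <- r) F t x) a b (\sum_(t <- r) v t).
Proof.
move=> H; elim: r => [|t r IH].
  rewrite big_nil.
  apply: (@is_RInt_ext R_NormedModule (fun _ => 0%R)) => [x _|]; first by rewrite big_nil.
  have := @is_RInt_const R_NormedModule a b 0%R; rewrite /scal /= /mult /= Rmult_0_r; exact.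
rewrite big_cons.
apply: (@is_RInt_ext R_NormedModule (fun x => F t x + \sum_(t <- r) F t x)) => [x _|].
  by rewrite big_cons.
exact: (@is_RInt_plus R_NormedModule _ _ _ _ _ _ (H t) IH).
Qed.

Definition CInt (g : R -> R[i]) : R[i] :=
  (RInt (fun x => cRe (g x)) 0 (PI/2)) +i* (RInt (fun x => cIm (g x)) 0 (PI/2)).
Definition ccont (g : R -> R[i]) :=
  forall x, continuous (fun y => cRe (g y)) x /\ continuous (fun y => cIm (g y)) x.

Lemma ReM (x y : R[i]) : cRe (x * y) = cRe x * cRe y - cIm x * cIm y.
Proof. by case: x; case: y. Qed.
Lemma ImM (x y : R[i]) : cIm (x * y) = cRe x * cIm y + cIm x * cRe y.
Proof. by case: x; case: y => a b c d /=; rewrite addrC. Qed.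
Lemma ReD (x y : R[i]) : cRe (x + y) = cRe x + cRe y.
Proof. by case: x; case: y. Qed.
Lemma ImD (x y : R[i]) : cIm (x + y) = cIm x + cIm y.
Proof. by case: x; case: y. Qed.

Lemma Re_sum (I : finType) (F : I -> R[i]) : cRe (\sum_t F t) = \sum_t cRe (F t).
Proof. exact: (big_morph (@complex.Re R) ReD (erefl _)). Qed.

Lemma RInt_lin (I : finType) (K : I -> R[i]) (g : I -> R -> R[i]) :
  (forall t, ccont (g t)) ->
  RInt (fun x => cRe (\sum_t K t * g t x)) 0 (PI/2) = cRe (\sum_t K t * CInt (g t)).
Proof.
move=> Hc.
have H : forall t, is_RInt (fun x => cRe (K t * g t x)) 0 (PI/2) (cRe (K t * CInt (g t))).
  move=> t.
  have E1 : ex_RInt (fun x => cRe (g t x)) 0 (PI/2).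
    by apply: ex_RInt_continuous => z _; case: (Hc t z).
  have E2 : ex_RInt (fun x => cIm (g t x)) 0 (PI/2).
    by apply: ex_RInt_continuous => z _; case: (Hc t z).
  have := @is_RInt_minus R_NormedModule _ _ _ _ _ _
    (@is_RInt_scal R_NormedModule _ _ _ (cRe (K t)) _ (RInt_correct _ _ _ E1))
    (@is_RInt_scal R_NormedModule _ _ _ (cIm (K t)) _ (RInt_correct _ _ _ E2)).
  rewrite ReM /=.
  apply: (@is_RInt_ext R_NormedModule) => x _.
  by rewrite ReM.
rewrite Re_sum.
apply: is_RInt_unique.
apply: (@is_RInt_ext R_NormedModule (fun x => \sum_t cRe (K t * g t x))).
  by move=> x _; rewrite Re_sum.
have := @is_RInt_sumseq I (index_enum I) _ _ _ _ H.
by [].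
Qed.

Lemma iint_prod (I : finType) m (c : I -> R[i]) (h : I -> nat -> R -> R[i]) :
  (forall t j, ccont (h t j)) ->
  iint_cube m (fun p => cRe (\sum_t c t * \prod_(j < m) h t j (p j)))
  = cRe (\sum_t c t * \prod_(j < m) CInt (h t j)).
Proof.
move=> Hc; elim: m c => [|m IH] c.
  by rewrite /=; congr cRe; apply: eq_bigr => t _; rewrite !big_ord0.
rewrite /=.
have E : forall x, (fun p : nat -> R => cRe (\sum_t c t * \prod_(j < m.+1)
           h t j (if Nat.eqb j m then x else p j)))
   = (fun p => cRe (\sum_t (c t * h t m x) * \prod_(j < m) h t j (p j))).
  move=> x; apply: functional_extensionality => p; congr cRe; apply: eq_bigr => t _.
  rewrite big_ord_recr /= Nat.eqb_refl -mulrA [_ * h t m x]mulrC; congr (_ * (_ * _)).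
  apply: eq_bigr => j _ /=.
  suff -> : Nat.eqb j m = false by [].
  apply/Nat.eqb_neq => E; move: (ltn_ord j); by rewrite E ltnn.
match goal with |- RInt ?f _ _ = _ =>
 have -> : f = (fun x => cRe (\sum_t (c t * \prod_(j < m) CInt (h t j)) * h t m x)) end.
  apply: functional_extensionality => x; rewrite E IH; congr cRe; apply: eq_bigr => t _.
  by rewrite -!mulrA [h t m x * _]mulrC.
rewrite RInt_lin //.
congr cRe; apply: eq_bigr => t _.
by rewrite big_ord_recr /= mulrA.
Qed.

Section RealInt.
Local Open Scope R_scope.
Lemma RInt_cos (k b : R) : k <> 0 ->
  is_RInt (fun x => cos (k*x)) 0 b (sin (k*b) / k).
Proof.
move=> hk.
have H := @is_RInt_derive R_CompleteNormedModule (fun x => sin (k*x) / k) (fun x => cos (k*x)) 0 b.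
replace (sin (k * b) / k) with (minus (sin (k*b) / k) (sin (k*0) / k)).
2:{ rewrite /minus /plus /Hierarchy.opp /= Rmult_0_r sin_0. field. exact: hk. }
apply: H => x _.
  auto_derive; first by []. field; exact: hk.
apply: ex_derive_continuous; auto_derive; by [].
Qed.

Lemma RInt_sin (k b : R) : k <> 0 ->
  is_RInt (fun x => sin (k*x)) 0 b ((1 - cos (k*b)) / k).
Proof.
move=> hk.
have H := @is_RInt_derive R_CompleteNormedModule (fun x => - cos (k*x) / k) (fun x => sin (k*x)) 0 b.
replace ((1 - cos (k * b)) / k) with (minus (- cos (k*b) / k) (- cos (k*0) / k)).
2:{ rewrite /minus /plus /Hierarchy.opp /= Rmult_0_r cos_0. field. exact: hk. }
apply: H => x _.
  auto_derive; first by []. field; exact: hk.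
apply: ex_derive_continuous; auto_derive; by [].
Qed.
End RealInt.
From mathcomp Require Import ring lra zify.


Lemma sin_natPI (n : nat) : sin ((n%:R * PI)%R) = 0.
Proof.
elim: n => [|n IH]; first by rewrite mul0r sin_0.
by rewrite -natr1 mulrDl mul1r neg_sin IH Ropp_0.
Qed.

Lemma cos_natPI (n : nat) : cos ((n%:R * PI)%R) = (-1) ^+ n.
Proof.
elim: n => [|n IH]; first by rewrite mul0r cos_0.
by rewrite -natr1 mulrDl mul1r neg_cos IH exprS mulN1r.
Qed.

Lemma trig_int (e : R) (a b : nat) : (e = 1 \/ e = -1) ->
  sin ((2 * e * (a%:R - b%:R) * (PI / 2))%R) = 0 /\
  cos ((2 * e * (a%:R - b%:R) * (PI / 2))%R) = (-1) ^+ (a + b).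
Proof.
have H2 : 2 != 0 :> R by rewrite pnatr_eq0.
move=> he; have -> : (2 * e * (a%:R - b%:R) * (PI / 2) = e * (a%:R * PI) - e * (b%:R * PI))%R.
  by field.
case: he => ->.
  rewrite !mul1r sin_minus cos_minus !sin_natPI !cos_natPI exprD.
  rewrite ?(RminusE, RmultE, RplusE, RoppE); split; ring.
rewrite !mulN1r -opprD sin_neg cos_neg sin_minus cos_minus !sin_natPI !cos_natPI exprD.
rewrite ?(RminusE, RmultE, RplusE, RoppE); split; ring.
Qed.

Definition ex (y : R) : R[i] := (cos y +i* sin y).
Definition vv (e : R) (a b : nat) : R[i] :=
  if a == b then (PI/2)%:C
  else 0 +i* ((1 - (-1) ^+ (a + b)) / (2 * e * (a%:R - b%:R))).

Lemma is_RInt_c (c : R) : is_RInt (fun _ => c) 0 (PI/2) (PI/2 * c).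
Proof.
have := @is_RInt_const R_NormedModule 0 (PI/2) c.
by rewrite /scal /= /mult /= RminusE subr0.
Qed.

Lemma ccont_ex (k : R) : ccont (fun x => ex ((k * x)%R)).
Proof.
move=> x; split; apply: ex_derive_continuous.
  by change (ex_derive (fun y => cos (Rmult k y)) x); auto_derive.
by change (ex_derive (fun y => sin (Rmult k y)) x); auto_derive.
Qed.

Lemma CInt_ex (e : R) (a b : nat) : (e = 1 \/ e = -1) ->
  CInt (fun x => ex ((2 * e * (a%:R - b%:R) * x)%R)) = vv e a b.
Proof.
move=> he; rewrite /CInt /vv /=.
case: eqP => [<-|/eqP neq].
  congr (_ +i* _).
    apply: is_RInt_unique.
    apply: (@is_RInt_ext R_NormedModule (fun _ => 1)); last first.
      by have := is_RInt_c 1; rewrite mulr1.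
    by move=> x _; rewrite subrr mulr0 mul0r cos_0.
  apply: is_RInt_unique.
  apply: (@is_RInt_ext R_NormedModule (fun _ => 0)); last first.
    by have := is_RInt_c 0; rewrite mulr0.
  by move=> x _; rewrite subrr mulr0 mul0r sin_0.
have hk : (2 * e * (a%:R - b%:R))%R != 0.
  rewrite mulf_neq0 // ?mulf_neq0 ?pnatr_eq0 //.
    by case: he => ->; rewrite ?oppr_eq0 oner_eq0.
  by rewrite subr_eq0 eqr_nat.
have hk' : (2 * e * (a%:R - b%:R))%R <> 0%R by apply/eqP.
have [Hs Hc] := trig_int e a b he.
congr (_ +i* _).
  rewrite (is_RInt_unique _ _ _ _ (RInt_cos _ (PI/2) hk')) Hs.
  by rewrite /Rdiv Rmult_0_l.
by rewrite (is_RInt_unique _ _ _ _ (RInt_sin _ (PI/2) hk')) Hc.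
Qed.

Lemma sc1 (x : R) : cos x ^+ 2 + sin x ^+ 2 = 1.
Proof. have := sin2_cos2 x; rewrite /Rsqr RplusE !RmultE => H. transitivity (sin x * sin x + cos x * cos x); first ring. exact: H. Qed.

Lemma cos_sub (x y : R) : cos ((x - y)%R) = cos x * cos y + sin x * sin y.
Proof. by rewrite cos_minus. Qed.

Lemma cos_dbl (x : R) : cos ((x + x)%R) = 1 - 2 * sin x ^+ 2.
Proof.
rewrite cos_plus !RminusE !RmultE.
transitivity ((cos x ^+ 2 + sin x ^+ 2) - 2 * sin x ^+ 2); first ring.
by rewrite sc1.
Qed.

Lemma exD (a b : R) : ex a * ex b = ex ((a + b)%R).
Proof.
apply/eqP; rewrite eq_complex /= cos_plus sin_plus !RminusE !RmultE !RplusE.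
by apply/andP; split; apply/eqP; ring.
Qed.

Lemma ex0 : ex 0 = 1.
Proof. by rewrite /ex cos_0 sin_0. Qed.

Lemma exX (a : R) (n : nat) : ex a ^+ n = ex ((n%:R * a)%R).
Proof.
elim: n => [|n IH]; first by rewrite expr0 mul0r ex0.
by rewrite exprS IH exD -natr1 mulrDl mul1r addrC.
Qed.

Lemma key (u v : R) :
  (ex ((u + u)%R) - ex ((v + v)%R)) * (ex ((- (u + u))%R) - ex ((- (v + v))%R))
  = (4 * sin ((u - v)%R) ^+ 2)%:C.
Proof.
apply/eqP; rewrite eq_complex /= !cos_neg !sin_neg.
apply/andP; split; apply/eqP.
  have E : ((u + u) - (v + v) = (u - v) + (u - v))%R by ring.
  have := cos_sub ((u + u)%R) ((v + v)%R); rewrite E cos_dbl => H.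
  have H1 := sc1 ((u + u)%R); have H2 := sc1 ((v + v)%R).
  rewrite ?(RminusE, RmultE, RplusE, RoppE).
  transitivity ((cos ((u + u)%R) ^+ 2 + sin ((u + u)%R) ^+ 2) + (cos ((v + v)%R) ^+ 2 + sin ((v + v)%R) ^+ 2)
     - 2 * (cos ((u + u)%R) * cos ((v + v)%R) + sin ((u + u)%R) * sin ((v + v)%R))); first ring.
  rewrite H1 H2 -H; ring.
rewrite ?(RminusE, RmultE, RplusE, RoppE); ring.
Qed.

Lemma vdm (m : nat) (z : nat -> R[i]) :
  \prod_(j < m) \prod_(k < j) (z j - z k)
  = \sum_(s : 'S_m) (-1) ^+ s * \prod_(i < m) z i ^+ s i.
Proof.
set a := \row_(j < m) z j.
have -> : \sum_(s : 'S_m) (-1) ^+ s * \prod_(i < m) z i ^+ s i = \det (Vandermonde m a).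
  rewrite -det_tr /determinant; apply: eq_bigr => s _; congr (_ * _).
  by apply: eq_bigr => i _; rewrite !mxE.
rewrite det_Vandermonde.
transitivity (\prod_(j < m) \prod_(k < m | (k < j)%N) (z j - z k)).
  apply: eq_bigr => j _.
  rewrite (big_ord_widen m (fun k => z j - z k)) //.
  exact: ltnW.
rewrite (exchange_big_dep predT) //=.
apply: eq_bigr => i _; apply: eq_bigr => j _.
by rewrite !mxE.
Qed.

Lemma prod_tri (c : R[i]) (m : nat) :
  \prod_(j < m) \prod_(k < j) (c * c) = c ^+ (m * m - m).
Proof.
elim: m => [|m IH]; first by rewrite big_ord0 expr0.
rewrite big_ord_recr /= IH prodr_const card_ord -expr2 -exprM -exprD.
congr (_ ^+ _).
nia.
Qed.

Definition pv (m : nat) (s : 'S_m) (j : nat) : nat :=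
  oapp (fun jj : 'I_m => val (s jj)) 0%N (insub j).
Arguments pv {m}.
Lemma pvE m (s : 'S_m) (j : 'I_m) : pv s j = s j.
Proof. by rewrite /pv valK. Qed.

Definition cc (m : nat) (t : 'S_m * 'S_m) : R[i] :=
  (-1) ^+ t.1 * (-1) ^+ t.2 * (2^-1) ^+ (m * m - m).
Arguments cc {m}.
Definition hh (m s : nat) (t : 'S_m * 'S_m) (j : nat) (x : R) : R[i] :=
  ex ((2 * eps s j * ((pv t.1 j)%:R - (pv t.2 j)%:R) * x)%R).
Arguments hh {m}.

Lemma key2 (u v : R) : (sin (u - v) ^+ 2)%:C =
  (ex ((u + u)%R) - ex ((v + v)%R)) * (ex ((- (u + u))%R) - ex ((- (v + v))%R)) * (2^-1 * 2^-1).
Proof.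
have E : forall r : R, (4 * r)%:C = 4 * r%:C by move=> r; rewrite rmorphM rmorph_nat.
rewrite key E.
have H2 : 2 != 0 :> R[i] by rewrite pnatr_eq0.
change (sin (u - v)) with (sin ((u - v)%R)).
by field.
Qed.

Lemma prodC (I : finType) (F : I -> R) : (\prod_i F i)%:C = \prod_i (F i)%:C.
Proof. exact: rmorph_prod. Qed.

Lemma integrand_C m s p :
  (integrand m s p)%:C = \sum_(t : 'S_m * 'S_m) cc t * \prod_(j < m) hh s t j (p j).
Proof.
pose u := fun j : nat => (eps s j * p j)%R.
rewrite /integrand prodC.
under eq_bigr => j _ do rewrite prodC.
under eq_bigr => j _ do under eq_bigr => k _ do rewrite (key2 (eps s j * p j) (eps s k * p k)).
pose Z := fun j : nat => ex ((eps s j * p j + eps s j * p j)%R).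
pose W := fun j : nat => ex ((- (eps s j * p j + eps s j * p j))%R).
rewrite (eq_bigr (fun j : 'I_m => (\prod_(k < j) (Z j - Z k)) * (\prod_(k < j) (W j - W k))
   * \prod_(k < j) ((2^-1 : R[i]) * 2^-1))); last first.
  by move=> j _; rewrite -!big_split.
rewrite !big_split /= vdm vdm prod_tri.
rewrite -mulrA mulr_suml.
under eq_bigr => a _ do rewrite mulr_suml mulr_sumr.
rewrite pair_big /=; apply: eq_bigr => [[a b]] _ /=.
rewrite /cc /=.
have -> : \prod_(j < m) hh s (a, b) j (p j) = (\prod_(i < m) Z i ^+ a i) * \prod_(i < m) W i ^+ b i.
  rewrite -big_split /=; apply: eq_bigr => i _.
  rewrite /hh /Z /W /= !pvE !exX exD; apply: f_equal.
  rewrite ?(RminusE, RmultE, RplusE, RoppE); ring.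
set x1 := (-1 : R[i]) ^+ a. set x2 := (-1 : R[i]) ^+ b.
set x3 := \prod_(i < m) Z i ^+ a i. set x4 := \prod_(i < m) W i ^+ b i.
set x5 := (2^-1 : R[i]) ^+ _.
clearbody x1 x2 x3 x4 x5; ring.
Qed.

Lemma iint_zero m : iint_cube m (fun _ => 0) = 0.
Proof.
elim: m => [|m IH] //=.
have -> : (fun x : R => iint_cube m (fun _ => 0)) = (fun _ => 0).
  by apply: functional_extensionality => x; rewrite IH.
apply: is_RInt_unique.
by have := is_RInt_c 0; rewrite mulr0.
Qed.

Lemma eps_pm s j : eps s j = 1 \/ eps s j = -1.
Proof. by rewrite /eps; case: ifP; auto. Qed.

Lemma CInt_hh m s (t : 'S_m * 'S_m) (j : 'I_m) :
  CInt (hh s t j) = vv (eps s j) (t.1 j) (t.2 j).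
Proof. by rewrite /hh !pvE; apply: CInt_ex; exact: eps_pm. Qed.

Lemma ReNi (z : R[i]) : cRe (- 'i * z) = cIm z.
Proof. by case: z => x y /=; rewrite !(mul0r, mulr0, subr0, oppr0, add0r, addr0, mul1r, mulN1r, opprK). Qed.

Lemma Rei (z : R[i]) : 0 = cIm z -> (cRe z)%:C = z.
Proof. by case: z => x y /= <-. Qed.

Lemma iint_s m s :
  (iint_cube m (integrand m s))%:C
  = \sum_(t : 'S_m * 'S_m) cc t * \prod_(j < m) vv (eps s j) (t.1 j) (t.2 j).
Proof.
have hc : forall (t : 'S_m * 'S_m) (j : nat), ccont (hh s t j).
  by move=> t j; exact: ccont_ex.
set G := \sum_(t : 'S_m * 'S_m) _.
have E1 : iint_cube m (integrand m s) = cRe G.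
  transitivity (iint_cube m (fun p => cRe (\sum_(t : 'S_m * 'S_m) cc t * \prod_(j < m) hh s t j (p j)))).
    congr iint_cube; apply: functional_extensionality => p.
    by rewrite -integrand_C.
  rewrite iint_prod //; congr cRe; apply: eq_bigr => t _; congr (_ * _).
  by apply: eq_bigr => j _; rewrite CInt_hh.
have E2 : 0 = cIm G.
  transitivity (iint_cube m (fun p => cRe (\sum_(t : 'S_m * 'S_m) (- 'i * cc t) * \prod_(j < m) hh s t j (p j)))).
    rewrite -(iint_zero m); congr iint_cube; apply: functional_extensionality => p.
    under eq_bigr do rewrite -mulrA.
    rewrite -mulr_sumr -integrand_C /=.
    by rewrite !(mul0r, mulr0, subr0, oppr0, add0r).
  rewrite iint_prod //.
  have -> : \sum_(t : 'S_m * 'S_m) - 'i * cc t * \prod_(j < m) CInt (hh s t j) = - 'i * G.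
    rewrite /G mulr_sumr; apply: eq_bigr => t _; rewrite -mulrA; congr (_ * (_ * _)).
    by apply: eq_bigr => j _; rewrite CInt_hh.
  by rewrite ReNi.
by rewrite E1; apply: Rei.
Qed.

Section Comb.
Variable R : comRingType.
Variable m : nat.

Lemma sign_sq (s : 'S_m) : (-1) ^+ s * (-1) ^+ s = 1 :> R.
Proof. by rewrite -expr2 sqrr_sign. Qed.

Lemma sgnM (a b : 'S_m) : (-1) ^+ (a * b)%g = (-1) ^+ a * (-1) ^+ b :> R.
Proof. by rewrite odd_permM signr_addb. Qed.

Lemma pairsum_det (M : 'M[R]_m) :
  \sum_(s : 'S_m) \sum_(t : 'S_m) (-1) ^+ s * (-1) ^+ t * \prod_(j < m) M (s j) (t j)
  = m`!%:R * \det M.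
Proof.
have H : forall s : 'S_m, \sum_(t : 'S_m) (-1) ^+ s * (-1) ^+ t * \prod_(j < m) M (s j) (t j)
   = \det M.
  move=> s; rewrite (reindex_inj (mulgI s)) /=.
  apply: eq_bigr => r _.
  rewrite (reindex_inj (@perm_inj _ s^-1)) /=.
  rewrite odd_permM signr_addb mulrA sign_sq mul1r.
  congr (_ * _); apply: eq_bigr => i _.
  by rewrite permKV permM permKV.
rewrite (eq_bigr (fun _ => \det M)) //.
by rewrite sumr_const card_Sn mulr_natl.
Qed.

Variable f : bool -> nat -> nat -> R.

Definition W (chi : 'I_m -> bool) : R :=
  \sum_(s : 'S_m) \sum_(t : 'S_m) (-1) ^+ s * (-1) ^+ t * \prod_(j < m) f (chi j) (s j) (t j).

Lemma W_ext (c1 c2 : 'I_m -> bool) : c1 =1 c2 -> W c1 = W c2.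
Proof.
move=> E; apply: eq_bigr => s _; apply: eq_bigr => t _; congr (_ * _).
by apply: eq_bigr => j _; rewrite E.
Qed.

Lemma W_perm (chi : 'I_m -> bool) (p : 'S_m) : W (fun j => chi (p j)) = W chi.
Proof.
rewrite /W (reindex_inj (mulgI p)) /=; apply: eq_bigr => s _.
rewrite (reindex_inj (mulgI p)) /=; apply: eq_bigr => t _.
rewrite !sgnM.
have -> : (-1) ^+ p * (-1) ^+ s * ((-1) ^+ p * (-1) ^+ t) = (-1) ^+ s * (-1) ^+ t :> R.
  by rewrite mulrACA sign_sq mul1r.
congr (_ * _).
rewrite (reindex_inj (@perm_inj _ p^-1)) /=.
apply: eq_bigr => i _.
by rewrite !permM !permKV.
Qed.

Lemma exists_perm_first (S : {set 'I_m}) :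
  exists p : 'S_m, forall j, (p j \in S) = (j < #|S|)%N.
Proof.
set e := enum S ++ enum (~: S).
have He : forall x, x \in e.
  by move=> x; rewrite mem_cat !mem_enum in_setC; case: (x \in S).
have sz : size e = m.
  by rewrite size_cat -!cardE cardsC card_ord.
have Hlt : forall x, (index x e < m)%N by move=> x; have := index_mem x e; rewrite He sz.
pose g x := Ordinal (Hlt x).
have ginj : injective g.
  move=> x y /(congr1 val) /= E.
  by move: E; apply: index_inj.
exists ((perm ginj)^-1)%g => j.
have E : index (((perm ginj)^-1)%g j) e = j.
  have := permKV (perm ginj) j; rewrite permE => /(congr1 val) /=; exact.
move: E; set x := ((perm ginj)^-1)%g j => E.
rewrite -E /e index_cat mem_enum.
case: (boolP (x \in S)) => Hx.
  by rewrite cardE index_mem mem_enum.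
by rewrite cardE ltnNge leq_addr.
Qed.

Lemma W_first (S : {set 'I_m}) : W (fun j => j \in S) = W (fun j => (j < #|S|)%N).
Proof.
have [p Hp] := exists_perm_first S.
rewrite -(W_perm _ p); apply: W_ext => j; by rewrite Hp.
Qed.

Lemma sum_sets (g : nat -> R) :
  \sum_(S : {set 'I_m}) g #|S| = \sum_(s < m.+1) 'C(m, s)%:R * g s.
Proof.
rewrite (partition_big (fun S : {set 'I_m} => (inord #|S| : 'I_m.+1)) predT) //=.
apply: eq_bigr => s _.
have Hm : forall S : {set 'I_m}, (#|S| <= m)%N.
  by move=> S; rewrite -[X in (_ <= X)%N](card_ord m) max_card.
rewrite (eq_bigl (fun S : {set 'I_m} => #|S| == s)); last first.
  move=> S; apply/eqP/eqP => [<-|E]; first by rewrite inordK // ltnS Hm.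
  by apply: val_inj; rewrite /= inordK ?E // ltnS Hm.
rewrite (eq_bigr (fun _ => g s)); last by move=> S /eqP ->.
rewrite sumr_const.
have -> : #|[pred S : {set 'I_m} | #|S| == s]| = 'C(m, s).
  have := card_draws 'I_m s; rewrite card_ord => <-; apply: eq_card => S; by rewrite inE.
by rewrite mulr_natl.
Qed.

Theorem comb_main (x : R) :
  \sum_(s < m.+1) (x ^+ s * 'C(m, s)%:R) * W (fun j => (j < s)%N)
  = m`!%:R * \det (\matrix_(k < m, n < m) (x * f true k n + f false k n)).
Proof.
rewrite -pairsum_det.
have E1 : forall s t : 'S_m, \prod_(j < m) (\matrix_(k < m, n < m) (x * f true k n + f false k n)) (s j) (t j)
   = \sum_(S : {set 'I_m}) x ^+ #|S| * \prod_(j < m) f (j \in S) (s j) (t j).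
  move=> s t.
  under eq_bigr do rewrite mxE.
  rewrite bigA_distr /=.
  apply: eq_bigr => S _.
  transitivity (\prod_i ((if i \in S then x else 1) * f (i \in S) (s i) (t i))).
    by apply: eq_bigr => i _; case: (i \in S); rewrite ?mul1r.
  rewrite big_split /=; congr (_ * _).
  rewrite -big_mkcond /= prodr_const; congr (_ ^+ _).
transitivity (\sum_(S : {set 'I_m}) x ^+ #|S| * W (fun j => (j < #|S|)%N)).
  rewrite (sum_sets (fun k => x ^+ k * W (fun j => (j < k)%N))).
  by apply: eq_bigr => s _; rewrite mulrCA mulrA.
symmetry.
transitivity (\sum_(s : 'S_m) \sum_(t : 'S_m) \sum_(S : {set 'I_m})
   (-1) ^+ s * (-1) ^+ t * (x ^+ #|S| * \prod_(j < m) f (j \in S) (s j) (t j))).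
  by apply: eq_bigr => s _; apply: eq_bigr => t _; rewrite E1 mulr_sumr.
under eq_bigr do rewrite exchange_big.
rewrite exchange_big; apply: eq_bigr => S _.
rewrite -W_first /W mulr_sumr; apply: eq_bigr => s _.
rewrite mulr_sumr; apply: eq_bigr => t _.
by rewrite mulrCA.
Qed.
End Comb.

Definition ff (b : bool) (a c : nat) : R[i] := vv (if b then -1 else 1) a c.

Lemma iint_W m s :
  (iint_cube m (integrand m s))%:C = (2^-1) ^+ (m * m - m) * W _ m ff (fun j => (j < s)%N).
Proof.
rewrite iint_s /W [RHS]mulr_sumr.
under [RHS]eq_bigr do rewrite mulr_sumr.
rewrite [RHS]pair_big /=; apply: eq_bigr => [[a b]] _ /=.
rewrite /cc /= mulrAC mulrC.
by congr (_ * (_ * _)).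
Qed.

Lemma CM (a b : R) : (a * b)%:C = a%:C * b%:C. Proof. exact: rmorphM. Qed.
Lemma CV (a : R) : (a^-1)%:C = (a%:C)^-1. Proof. exact: fmorphV. Qed.
Lemma CX (a : R) n : (a ^+ n)%:C = a%:C ^+ n. Proof. exact: rmorphXn. Qed.
Lemma Cn n : ((n%:R : R))%:C = n%:R. Proof. exact: rmorph_nat. Qed.
Lemma CB (a b : R) : (a - b)%:C = a%:C - b%:C. Proof. exact: rmorphB. Qed.
Lemma CD (a b : R) : (a + b)%:C = a%:C + b%:C. Proof. exact: rmorphD. Qed.
Lemma CN (a : R) : (- a)%:C = - a%:C. Proof. exact: rmorphN. Qed.
Lemma C1 : (1 : R)%:C = 1. Proof. by []. Qed.
Lemma Ci (r : R) : (0 +i* r) = 'i * r%:C.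
Proof. apply/eqP; rewrite eq_complex /=; apply/andP; split; apply/eqP; ring. Qed.
Lemma invi : ('i : R[i])^-1 = - 'i.
Proof.
have H : ('i : R[i]) * (- 'i) = 1 by rewrite mulrN -expr2 sqr_i opprK.
have nz : ('i : R[i]) != 0 by apply/eqP => /(congr1 (@complex.Im R)) /= /eqP; rewrite oner_eq0.
by rewrite -[LHS]mulr1 -H mulKf.
Qed.

Lemma sign_int (a b : nat) : (-1 : R[i]) ^ (b%:Z - a%:Z) = ((-1) ^+ (a + b))%:C.
Proof.
rewrite exprzDr ?unitrN1 // -exprnN invr_sign CX CN C1 exprD mulrC.
by [].
Qed.

Lemma int_cast (a b : nat) : ((b%:Z - a%:Z)%:~R : R[i]) = b%:R - a%:R.
Proof. by rewrite intrB. Qed.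

Lemma PIC_neq0 : (PI%:C : R[i]) != 0.
Proof. apply/eqP => H; apply: PI_neq0; exact: (congr1 (@complex.Re R) H). Qed.

Lemma entry (m : nat) (beta : R) (k n : 'I_m) :
  (exp beta)%:C * ff true k n + ff false k n
  = PI%:C * (if k == n then ((exp beta + 1) / 2)%:C
    else ((1 - exp beta)%:C * (1 - (-1) ^ (n%:Z - k%:Z))
          / (2 * 'i * (PI%:C) * ((n%:Z - k%:Z)%:~R)))).
Proof.
have H2 : 2 != 0 :> R[i] by rewrite pnatr_eq0.
have HP := PIC_neq0.
rewrite /ff /vv.
case: (eqVneq k n) => [->|neq].
  rewrite !eqxx !(CM, CV, CD, CX, Cn, C1).
  by field.
have neq' : (k : nat) != n by [].
rewrite ?(negbTE neq) ?(negbTE neq').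
have HD : (k%:R - n%:R : R[i]) != 0 by rewrite subr_eq0 eqr_nat.
have HD' : (n%:R - k%:R : R[i]) != 0 by rewrite subr_eq0 eqr_nat eq_sym.
have HN1 : (-1 : R[i]) != 0 by rewrite oppr_eq0 oner_eq0.
set P := PI%:C in HP *; clearbody P.
rewrite sign_int int_cast !Ci CB.
set x := (exp beta)%:C; clearbody x.
rewrite !(CM, CV, CD, CB, CN, CX, Cn, C1) !invfM invi.
set S := (-1) ^+ (k + n); clearbody S.
set I := ('i : R[i]); clearbody I.
set a := (k%:R : R[i]) in HD HD' *; set b := (n%:R : R[i]) in HD HD' *; clearbody a b.
have HD2 : b - a = - (a - b) by rewrite opprB.
rewrite HD2; rewrite HD2 oppr_eq0 in HD'.
by field; rewrite HD HP.
Qed.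

Theorem mainTheorem7 (m : nat) (beta : R) (hm : (1 <= m)%N) :
  \sum_(s < m.+1) ((exp (INR s * beta)) * F s m)%:C = \det (Tmat m beta).
Proof.
have HP := PIC_neq0.
have Hf : forall k : nat, (k`!%:R : R[i]) != 0 by move=> k; rewrite pnatr_eq0 -lt0n fact_gt0.
have H2 : 2 != 0 :> R[i] by rewrite pnatr_eq0.
have Hterm : forall s : 'I_m.+1, ((exp (INR s * beta)) * F s m)%:C
   = ((exp beta)%:C ^+ s * 'C(m, s)%:R) * W _ m ff (fun j => (j < s)%N) * (PI%:C ^+ m * m`!%:R)^-1.
  move=> s.
  have Hs : (s <= m)%N by rewrite -ltnS.
  have HC : ('C(m, s)%:R : R[i]) != 0 by rewrite pnatr_eq0 -lt0n bin_gt0.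
  have -> : exp (INR s * beta) = exp beta ^+ s by rewrite expRX RmultE INRE mulr_natl.
  rewrite /F.
  move: HP; set P := PI; clearbody P => HP.
  rewrite !(CM, CV, CX, Cn) iint_W.
  rewrite -(bin_fact Hs) !natrM exprVn.
  set Wt := W _ _ _ _; clearbody Wt.
  set x := (exp beta)%:C; clearbody x.
  have H2k : (2 : R[i]) ^+ (m * m - m) != 0 by rewrite expf_neq0.
  by field; rewrite ?H2k ?HP ?Hf ?HC ?expf_neq0.
rewrite (eq_bigr _ (fun s _ => Hterm s)) -mulr_suml comb_main.
have Hdet : \det (\matrix_(k < m, n < m) ((exp beta)%:C * ff true k n + ff false k n))
   = PI%:C ^+ m * \det (Tmat m beta).
  rewrite -detZ; congr (\det _); apply/matrixP => k n; rewrite !mxE; exact: entry.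
rewrite Hdet.
by field; rewrite ?HP ?Hf ?expf_neq0.
Qed.
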